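(* Consider EF-BV with $R$ proper closed convex and $f$ $L$-smooth. For every $t\ge0$, with $u^{t+1}=\frac1\gamma(x^t-x^{t+1})-g^{t+1}$ (which belongs to $\partial R(x^{t+1})$), $$f(x^{t+1})+R(x^{t+1})\le f(x^t)+R(x^t)+\frac\gamma2\|\nabla f(x^t)-g^{t+1}\|^2+\Big(\frac L2-\frac1{2\gamma}+\frac{\gamma L^2}{2}\Big)\|x^{t+1}-x^t\|^2-\frac\gamma4\|\nabla f(x^{t+1})+u^{t+1}\|^2 .$$
   Context: $f:\mathbb{R}^d\to\mathbb{R}$ is differentiable with $L$-Lipschitz gradient; $R:\mathbb{R}^d\to\mathbb{R}\cup\{+\infty\}$ proper closed convex, $\mathrm{prox}_{\gamma R}(x)=\arg\min_y(\gamma R(y)+\frac12\|x-y\|^2)$, $\gamma>0$. In EF-BV the iterates satisfy $x^{t+1}=\mathrm{prox}_{\gamma R}(x^t-\gamma g^{t+1})$, where $g^{t+1}\in\mathbb{R}^d$ is the (arbitrary, possibly random) gradient estimate computed at iteration $t$; the inequality holds pointwise for any such $x^t$, $g^{t+1}$, $x^{t+1}$ with $x^t$ in the domain of $R$. *)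

(* Defs.v *)
From HB Require Import structures.
From mathcomp Require Import all_boot all_order all_algebra.
From mathcomp Require Import all_classical all_reals all_analysis.
Set Implicit Arguments. Unset Strict Implicit. Unset Printing Implicit Defensive.
Import Order.TTheory GRing.Theory Num.Theory.
Import numFieldNormedType.Exports.
Local Open Scope classical_set_scope.
Local Open Scope ring_scope.

Section Defs.
Context {R : realType} {d : nat}.

Definition dotv (u v : 'rV[R]_d) : R := \sum_(i < d) u ord0 i * v ord0 i.
Definition sqnorm (u : 'rV[R]_d) : R := dotv u u.
Definition enorm (u : 'rV[R]_d) : R := Num.sqrt (sqnorm u).

Definition has_gradient (f : 'rV[R]_d -> R) (gradf : 'rV[R]_d -> 'rV[R]_d) :=
  forall x, differentiable f x /\ forall v, ('d f x : 'rV[R]_d -> R) v = dotv (gradf x) v.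

Definition lipschitz_grad (gradf : 'rV[R]_d -> 'rV[R]_d) (L : R) :=
  forall x y, enorm (gradf x - gradf y) <= L * enorm (x - y).

Definition proper_fun (Rf : 'rV[R]_d -> \bar R) :=
  (forall x, Rf x != -oo%E) /\ (exists x, Rf x != +oo%E).

(* closed = epigraph closed (equivalently lower semicontinuous) *)
Definition closed_fun (Rf : 'rV[R]_d -> \bar R) :=
  closed [set p : 'rV[R]_d * R | (Rf p.1 <= p.2%:E)%E].

(* convex = epigraph convex *)
Definition convex_fun (Rf : 'rV[R]_d -> \bar R) :=
  forall x y (a b t : R), (Rf x <= a%:E)%E -> (Rf y <= b%:E)%E ->
    0 <= t -> t <= 1 ->
    (Rf (t *: x + (1 - t) *: y)%R <= (t * a + (1 - t) * b)%:E)%E.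

Definition is_prox (gamma : R) (Rf : 'rV[R]_d -> \bar R) (z p : 'rV[R]_d) :=
  forall y, (gamma%:E * Rf p + (sqnorm (z - p) / 2)%:E
             <= gamma%:E * Rf y + (sqnorm (z - y) / 2)%:E)%E.

End Defs.

(* Main.v *)
Require Import Defs.
From HB Require Import structures.
From mathcomp Require Import all_boot all_order all_algebra.
From mathcomp Require Import all_classical all_reals all_analysis.
From mathcomp Require Import ring lra.
Import Order.TTheory GRing.Theory Num.Theory.
Import numFieldNormedType.Exports.
Local Open Scope ring_scope.

Section Lin.
Context {R : realType} {d : nat}.
Implicit Types u v w : 'rV[R]_d.

Lemma dotvC u v : dotv u v = dotv v u.
Proof. by apply: eq_bigr => i _; rewrite mulrC. Qed.
Lemma dotvDl u v w : dotv (u + v) w = dotv u w + dotv v w.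
Proof. by rewrite /dotv -big_split; apply: eq_bigr => i _; rewrite mxE mulrDl. Qed.
Lemma dotvZl (a : R) u w : dotv (a *: u) w = a * dotv u w.
Proof. by rewrite /dotv mulr_sumr; apply: eq_bigr => i _; rewrite mxE mulrA. Qed.
Lemma dotvNl u w : dotv (- u) w = - dotv u w.
Proof. by rewrite -scaleN1r dotvZl mulN1r. Qed.
Lemma dotvBl u v w : dotv (u - v) w = dotv u w - dotv v w.
Proof. by rewrite dotvDl dotvNl. Qed.
Lemma dotvDr u v w : dotv w (u + v) = dotv w u + dotv w v.
Proof. by rewrite dotvC dotvDl !(dotvC w). Qed.
Lemma dotvZr (a : R) u w : dotv w (a *: u) = a * dotv w u.
Proof. by rewrite dotvC dotvZl dotvC. Qed.
Lemma dotvBr u v w : dotv w (u - v) = dotv w u - dotv w v.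
Proof. by rewrite dotvC dotvBl !(dotvC w). Qed.
Lemma sqnorm_ge0 u : 0 <= sqnorm u.
Proof. by apply: sumr_ge0 => i _; rewrite -expr2 sqr_ge0. Qed.
Lemma sqnorm_eq0 u : sqnorm u = 0 -> u = 0.
Proof.
move=> /eqP; rewrite /sqnorm /dotv psumr_eq0; last by move=> i _; rewrite -expr2 sqr_ge0.
move=> /allP H; apply/rowP => i; rewrite mxE.
have := H i (mem_index_enum i); rewrite /= mulf_eq0 orbb => /eqP.
by rewrite (ord1 ord0).
Qed.
Lemma dotv0l w : dotv 0 w = 0.
Proof. by rewrite /dotv big1 // => i _; rewrite mxE mul0r. Qed.
Lemma sqnormD u v : sqnorm (u + v) = sqnorm u + 2 * dotv u v + sqnorm v.
Proof. rewrite /sqnorm dotvDl !dotvDr (dotvC v u); ring. Qed.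
Lemma sqnormB u v : sqnorm (u - v) = sqnorm u - 2 * dotv u v + sqnorm v.
Proof. rewrite /sqnorm dotvBl !dotvBr (dotvC v u); ring. Qed.
Lemma sqnormZ (a : R) u : sqnorm (a *: u) = a ^+ 2 * sqnorm u.
Proof. rewrite /sqnorm dotvZl dotvZr; ring. Qed.
Lemma enorm_sq u : enorm u ^+ 2 = sqnorm u.
Proof. by rewrite /enorm sqr_sqrtr // sqnorm_ge0. Qed.
Lemma enorm_ge0 u : 0 <= enorm u.
Proof. exact: sqrtr_ge0. Qed.

Lemma cauchy_schwarz u v : dotv u v <= enorm u * enorm v.
Proof.
have [a0|ua] := eqVneq (enorm u) 0.
  have : sqnorm u = 0 by rewrite -enorm_sq a0 expr0n.
  by move/sqnorm_eq0 => ->; rewrite dotv0l mulr_ge0 // enorm_ge0.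
have [b0|vb] := eqVneq (enorm v) 0.
  have : sqnorm v = 0 by rewrite -enorm_sq b0 expr0n.
  by move/sqnorm_eq0 => ->; rewrite dotvC dotv0l mulr_ge0 // enorm_ge0.
have ha : 0 < enorm u by rewrite lt_def ua enorm_ge0.
have hb : 0 < enorm v by rewrite lt_def vb enorm_ge0.
have H := sqnorm_ge0 (enorm v *: u - enorm u *: v).
rewrite sqnormB !sqnormZ dotvZl dotvZr -!enorm_sq in H.
have hab : 0 < enorm u * enorm v by apply: mulr_gt0.
rewrite -(ler_pM2l hab); nra.
Qed.
Lemma enormZ (a : R) u : enorm (a *: u) = `|a| * enorm u.
Proof. by rewrite /enorm sqnormZ sqrtrM ?sqr_ge0 // sqrtr_sqr. Qed.
End Lin.

Lemma descent {R : realType} {d : nat} (f : 'rV[R]_d -> R) gradf (L : R) :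
  has_gradient f gradf -> lipschitz_grad gradf L ->
  forall x s, f (x + s) <= f x + dotv (gradf x) s + L / 2 * sqnorm s.
Proof.
move=> Hg Hl x s.
pose h := fun t : R => f (x + t *: s).
have dh : forall t, is_derive t (1:R) h (dotv (gradf (x + t*:s)) s).
  move=> t; have [df dfv] := Hg (x + t*:s).
  have E : (fun e : R => e^-1 *: ((h \o shift t) (e *: 1) - h t)) =
      (fun e => e^-1 *: ((f \o shift (x + t*:s)) (e *: s) - f (x + t*:s))).
    apply/funext => e /=; rewrite /h [e *: 1]mulr1 scalerDl.
    by rewrite addrCA.
  split.
    by rewrite /derivable E; exact: diff_derivable.
  by rewrite /derive E -/(derive f _ s) deriveE // dfv.
pose c1 := dotv (gradf x) s.
pose c2 := L / 2 * sqnorm s.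
pose phi := h - c1 \*: (@id R) - c2 \*: (@id R * @id R).
pose dphi := fun t : R => dotv (gradf (x + t*:s)) s - c1 - c2 * (2 * t).
have dp : forall t, is_derive t (1:R) phi (dphi t).
  move=> t; apply: is_derive_eq; rewrite /dphi /=.
  rewrite /GRing.scale /=; ring.
have [c cin E] := @MVT_segment R phi dphi 0 1 ler01 (fun t _ => dp t)
  (derivable_within_continuous (fun t _ => @ex_derive _ _ _ _ _ _ _ (dp t))).
have Hd : dphi c <= 0.
  move: cin; rewrite in_itv /= => /andP [c0 c1'].
  rewrite /dphi /c1 -dotvBl.
  have H1 := cauchy_schwarz (gradf (x + c *: s) - gradf x) s.
  have H2 := Hl (x + c *: s) x.
  rewrite addrAC subrr add0r enormZ ger0_norm // in H2.
  have H3 := ler_wpM2r (enorm_ge0 s) H2.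
  have H4 : enorm s * enorm s = sqnorm s by rewrite -expr2 enorm_sq.
  rewrite /c2; nra.
have e1 : phi 1 = f (x + 1 *: s) - c1 * 1 - c2 * (1 * 1) by [].
have e0 : phi 0 = f (x + 0 *: s) - c1 * 0 - c2 * (0 * 0) by [].
move: E; rewrite e1 e0 scale1r scale0r addr0 subr0 !mulr1 mulr0 => E.
move: Hd; rewrite -E -/c1 -/c2 => Hd; lra.
Qed.

Lemma lim_small (R : realType) (a b c : R) : 0 <= c ->
  (forall t, 0 < t -> t <= 1 -> a <= b + t * c) -> a <= b.
Proof.
move=> c0 H; apply/ler_addgt0Pr => e e0.
pose t := e / (e + c + 1).
have hd : 0 < e + c + 1 by lra.
have ht : t * (e + c + 1) = e by rewrite /t mulfVK // gt_eqF.
have t0 : 0 < t by rewrite /t divr_gt0.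
have t1 : t <= 1 by nra.
have := H t t0 t1; nra.
Qed.

Theorem mainTheorem14 (R : realType) (d : nat)
  (f : 'rV[R]_d -> R) (gradf : 'rV[R]_d -> 'rV[R]_d) (L : R)
  (Rf : 'rV[R]_d -> \bar R) (gamma : R)
  (xt g x1 : 'rV[R]_d) :
  has_gradient f gradf -> lipschitz_grad gradf L ->
  proper_fun Rf -> closed_fun Rf -> convex_fun Rf ->
  0 < gamma ->
  Rf xt != +oo%E ->
  is_prox gamma Rf (xt - gamma *: g) x1 ->
  let u := gamma^-1 *: (xt - x1) - g in
  ((f x1)%:E + Rf x1
   <= (f xt)%:E + Rf xt
      + (gamma / 2 * sqnorm (gradf xt - g)
         + (L / 2 - 1 / (2 * gamma) + gamma * L ^+ 2 / 2) * sqnorm (x1 - xt)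
         - gamma / 4 * sqnorm (gradf x1 + u))%:E)%E.
Proof.
move=> Hg Hl [Hninf _] _ Hconv hg Hx Hprox; rewrite [in X in is_true X]/=.
case Ex: (Rf xt) Hx => [r0| |] // _; last by have := Hninf xt; rewrite Ex.
have P0 := Hprox xt; rewrite Ex in P0.
case E1: (Rf x1) P0 => [r1| |] P0; [|by move: P0; rewrite mulr_infty gtr0_sg // mul1e addye //
  | by have := Hninf x1; rewrite E1].
set z := xt - gamma *: g.
pose s := x1 - xt.
have Pr : gamma * r1 <= gamma * r0 - sqnorm s - gamma * dotv g s.
  apply: (@lim_small R _ _ (sqnorm (xt - x1) / 2)).
    by rewrite divr_ge0 // sqnorm_ge0.
  move=> t t0 t1.
  pose yt := t *: xt + (1 - t) *: x1.
  have Hc := Hconv xt x1 r0 r1 t; rewrite Ex E1 !lexx in Hc.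
  have Hc' : (Rf yt <= (t * r0 + (1 - t) * r1)%:E)%E := Hc erefl erefl (ltW t0) t1.
  have Hp := Hprox yt.
  rewrite E1 in Hp.
  case Ey: (Rf yt) Hc' Hp => [ry| |] Hc' Hp; [| by [] | by have := Hninf yt; rewrite Ey].
  rewrite -!EFinM -!EFinD lee_fin in Hp.
  rewrite lee_fin in Hc'.
  have ev : xt - gamma *: g - yt = (xt - gamma *: g - x1) - t *: (xt - x1).
    by apply/rowP => i; rewrite !mxE; ring.
  have key : sqnorm (xt - gamma *: g - yt) = sqnorm (xt - gamma *: g - x1)
     - 2 * t * dotv (xt - gamma *: g - x1) (xt - x1) + t ^+ 2 * sqnorm (xt - x1).
    rewrite ev [LHS]sqnormB sqnormZ dotvZr; ring.
  have ez : dotv (xt - gamma *: g - x1) (xt - x1) = sqnorm (xt - x1) - gamma * dotv g (xt - x1).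
    have -> : xt - gamma *: g - x1 = (xt - x1) - gamma *: g by apply/rowP => i; rewrite !mxE; ring.
    by rewrite dotvBl dotvZl.
  rewrite key ez in Hp.
  have eN : s = (-1) *: (xt - x1) by apply/rowP => i; rewrite !mxE; ring.
  have es : dotv g s = - dotv g (xt - x1) by rewrite eN dotvZr mulN1r.
  have es2 : sqnorm s = sqnorm (xt - x1) by rewrite eN sqnormZ expr2 mulN1r opprK mul1r.
  have Hc2 := ler_wpM2l (ltW hg) Hc'.
  rewrite es es2 -(ler_pM2l t0).
  lra.
have D := @descent _ _ f gradf L Hg Hl xt s; rewrite /s subrKC in D.
rewrite -!EFinD lee_fin.
have hg0 : gamma != 0 by rewrite gt_eqF.
pose a := gradf xt - g.
pose b := gradf x1 - gradf xt.
pose p := a - gamma^-1 *: s.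
have eu : gradf x1 + (gamma^-1 *: (xt - x1) - g) = p + b.
  by apply/rowP => i; rewrite !mxE; ring.
rewrite eu [sqnorm (p + b)]sqnormD -/s -/a.
have eP : sqnorm p = sqnorm a - 2 * (gamma^-1 * dotv a s) + gamma^-1^+2 * sqnorm s.
  by rewrite /p sqnormB sqnormZ dotvZr.
have eAs : dotv a s = dotv (gradf xt) s - dotv g s by rewrite dotvBl.
have Hpb := sqnorm_ge0 (p - b); rewrite sqnormB in Hpb.
have Hb : sqnorm b <= L ^+ 2 * sqnorm s.
  have H := Hl x1 xt; rewrite -/b -/s in H.
  have := enorm_ge0 b; rewrite -!enorm_sq; nra.
have F1 : gamma * sqnorm p = gamma * sqnorm a - 2 * dotv a s + gamma^-1 * sqnorm s.
  by rewrite eP; field.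
have F2 := ler_wpM2l (ltW hg) Hb.
have F3 := mulr_ge0 (ltW hg) Hpb.
have F4 : 1 / (2 * gamma) = gamma^-1 / 2 by field.
have Pr' : r1 <= r0 - gamma^-1 * sqnorm s - dotv g s.
  rewrite -(ler_pM2l hg) mulrBr mulrBr mulrA mulfV // mul1r; lra.
rewrite F4.
lra.
Qed.
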